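(* Let $G$ be a connected graph with a pair of vertices of order $h$ and a marking $S$. Let $v,v'$ be two vertices of $G$ joined by exactly $e\geq 1$ edges, with weights $s$ and $s'$ where $s>s'$, and normalize the marking (by adding a constant vector) so that $s'=0$. Let $G'$ be the graph obtained from $G$ by thickening the edges between $v$ and $v'$. Then the number of spanning trees satisfies $|\Phi(G')|=s\,(es)^{s-1}\,|\Phi(G)|$.
   Context: Graphs are finite, connected, may have multiple edges, no loops. With $c_{ij}$ ($i\neq j$) the number of edges joining $v_i,v_j$, $c_{ii}=-\sum_{j\ne i}c_{ij}$ and $M(G)=(c_{ij})$, $\mathbb{Z}^n/\mathrm{Im}(M(G))\cong \mathbb{Z}\times\Phi(G)$ with $\Phi(G)$ finite, and $|\Phi(G)|$ equals the number of spanning trees of $G$. A pair $\{v_i,v_j\}$ has order $h>0$ if there is $S=(s_1,\dots,s_n)^t\in\mathbb{Z}^n$ with $M(G)S=h(e_i-e_j)$ and $\gcd(s_1-s_n,\dots,s_{n-1}-s_n)=1$; $S$ is a marking, $s_k$ the weight of $v_k$, and $S+\alpha(1,\dots,1)^t$ is also a marking. Thickening the $e$ edges between $v'$ (weight $s'$) and $v$ (weight $s>s'$): delete these edges, add new vertices $w_1,\dots,w_{s-s'-1}$, and with $w_0=v'$, $w_{s-s'}=v$, join $w_{k-1}$ and $w_k$ by $e(s-s')$ edges for $k=1,\dots,s-s'$. *)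

(* Defs.v *)
From mathcomp Require Import all_boot all_order all_algebra.
Set Implicit Arguments. Unset Strict Implicit. Unset Printing Implicit Defensive.
Import GRing.Theory Num.Theory.

(* A finite loopless multigraph on the vertex set 'I_m is given by its
   edge-multiplicity function c : 'I_m -> 'I_m -> nat (c i j = number of
   edges joining v_i and v_j). *)
Definition multigraph (m : nat) (c : 'I_m -> 'I_m -> nat) : Prop :=
  (forall i j, c i j = c j i) /\ (forall i, c i i = 0%N).

Definition mg_connected (m : nat) (c : 'I_m -> 'I_m -> nat) : Prop :=
  forall i j, connect [rel x y | (0 < c x y)%N] i j.

Definition lapM (m : nat) (c : 'I_m -> 'I_m -> nat) : 'M[int]_m :=
  \matrix_(i, j) (if i == j then (- Posz (\sum_(k | k != i) c i k)%N)%R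
                  else Posz (c i j)).

(* Edges of the multigraph: triples (i, j, k) with i < j and k < c i j
   (the k-th of the c i j parallel edges joining v_i and v_j). *)
Definition mg_bound (m : nat) (c : 'I_m -> 'I_m -> nat) : nat :=
  (\max_(p : 'I_m * 'I_m) c p.1 p.2)%N.

Definition edge_t (m : nat) (c : 'I_m -> 'I_m -> nat) : finType :=
  ('I_m * 'I_m * 'I_(mg_bound c))%type.

Definition is_edge (m : nat) (c : 'I_m -> 'I_m -> nat) (t : edge_t c) : bool :=
  (t.1.1 < t.1.2)%N && (t.2 < c t.1.1 t.1.2)%N.

Definition sub_adj (m : nat) (c : 'I_m -> 'I_m -> nat) (T : {set edge_t c}) :
  rel 'I_m :=
  fun x y => [exists t in T, ((t.1.1 == x) && (t.1.2 == y))
                          || ((t.1.1 == y) && (t.1.2 == x))].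

Definition spanning_tree (m : nat) (c : 'I_m -> 'I_m -> nat)
    (T : {set edge_t c}) : bool :=
  [&& T \subset [set t | is_edge t], #|T| == m.-1 &
      [forall x, forall y, connect (sub_adj T) x y]].

Definition num_spanning_trees (m : nat) (c : 'I_m -> 'I_m -> nat) : nat :=
  #|[set T : {set edge_t c} | spanning_tree T]|.

(* Thickening the edges between v' and v, where d = s - s' >= 1 and the
   e = c v v' edges are replaced by a path w_0 = v', w_1, ..., w_{d-1},
   w_d = v, consecutive vertices joined by e*d edges.  The new vertices
   w_1, ..., w_{d-1} are the vertices n, ..., n + d - 2 of 'I_(n + d.-1). *)
Definition thick_pos (n : nat) (v v' : 'I_n) (d : nat) (x : nat) : option nat :=
  if x == (v' : nat) then Some 0%N
  else if x == (v : nat) then Some d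
  else if (n <= x)%N then Some (x - n).+1
  else None.

Definition thicken (n : nat) (c : 'I_n -> 'I_n -> nat) (v v' : 'I_n) (d : nat) :
    'I_(n + d.-1) -> 'I_(n + d.-1) -> nat :=
  fun x y =>
    match thick_pos v v' d x, thick_pos v v' d y with
    | Some a, Some b => if (a.+1 == b) || (b.+1 == a) then (c v v' * d)%N else 0%N
    | _, _ =>
      match @insub _ (fun k => (k < n)%N) _ (val x),
            @insub _ (fun k => (k < n)%N) _ (val y) with
      | Some i, Some j => c (i : 'I_n) j
      | _, _ => 0%N
      end
    end.
Arguments thicken {n} c v v' d _ _.

(* Main.v *)
Require Import Defs.
From mathcomp Require Import all_boot all_order all_algebra.
From mathcomp Require Import zify ring.
Set Implicit Arguments. Unset Strict Implicit. Unset Printing Implicit Defensive.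

Definition endsEq (V : eqType) (p : V * V) (x y : V) : bool :=
  ((p.1 == x) && (p.2 == y)) || ((p.1 == y) && (p.2 == x)).

Lemma endsEqC (V : eqType) (p : V * V) x y : endsEq p x y = endsEq p y x.
Proof. by rewrite /endsEq orbC. Qed.

Lemma connect_mapW (V1 V2 : finType) (r1 : rel V1) (r2 : rel V2) (f : V1 -> V2) :
  (forall x y, r1 x y -> connect r2 (f x) (f y)) ->
  forall x y, connect r1 x y -> connect r2 (f x) (f y).
Proof.
move=> H x y /connectP [p Hp ->]; elim: p x Hp => //= z p IH x /andP [rxz Hp].
exact: connect_trans (H _ _ rxz) (IH _ Hp).
Qed.

Lemma connect_closedW (V : finType) (r : rel V) (C : pred V) :
  (forall z z', C z -> r z z' -> C z') ->
  forall x y, C x -> connect r x y -> C y.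
Proof.
move=> H x y Cx /connectP [p Hp ->]; elim: p x Hp Cx => //= z p IH x /andP [rxz Hp] Cx.
exact: IH Hp (H _ _ Cx rxz).
Qed.

Section Gen.
Variables (V E : finType) (ends : E -> V * V).

Definition adjE (T : {set E}) : rel V :=
  fun x y => [exists t in T, endsEq (ends t) x y].

Definition treeE (T : {set E}) : bool :=
  (#|T| == #|V|.-1) && [forall x, forall y, connect (adjE T) x y].

Definition tauE : nat := #|[set T : {set E} | treeE T]|.

Lemma adjE_sym T : symmetric (adjE T).
Proof. by move=> x y; apply: eq_existsb => t; rewrite endsEqC. Qed.

End Gen.

Definition rel_of (V : eqType) (s : seq (V * V)) : rel V :=
  fun x y => has (fun p => endsEq p x y) s.

Lemma rel_of_sym (V : eqType) s : symmetric (@rel_of V s).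
Proof. by move=> x y; apply: eq_has => p; rewrite endsEqC. Qed.

Lemma lowbound_seq (V : finType) (s : seq (V * V)) :
  exists X : {set V}, #|V| <= #|X| + size s /\
    {in X &, forall x y, connect (rel_of s) x y -> x = y}.
Proof.
elim: s => [|p s [X [HX IH]]].
  exists setT; split; first by rewrite cardsT addn0.
  move=> x y _ _ /connectP [[|z q] _ ->] //= /andP [].
have symS : connect_sym (rel_of s) by apply: sym_connect_sym; apply: rel_of_sym.
pose B := [set x in X | connect (rel_of s) x p.2].
have B1 : #|B| <= 1.
  apply/card_le1_eqP => x y; rewrite !inE => /andP [xX xb] /andP [yX yb].
  apply: IH => //; apply: (connect_trans yb); by rewrite symS.
exists (X :\: B); split.
  have: #|X| = #|X :\: B| + #|B|.
    rewrite -(cardsID B X) addnC; congr (_ + _).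
    by apply: eq_card => x; rewrite !inE; case: (x \in X); rewrite ?andbT ?andbF.
  move=> HH; rewrite [size _]/=; clearbody B; lia.
have key : forall x y, x \in X :\: B -> y \in X :\: B ->
    ~~ connect (rel_of s) x p.1 -> connect (rel_of (p :: s)) x y -> x = y.
  move=> x y; rewrite !inE => /andP [xB xX] /andP [yB yX] xa cxy.
  apply: IH => //.
  have xb : ~~ connect (rel_of s) x p.2 by move: xB; rewrite xX.
  apply: (connect_closedW (C := connect (rel_of s) x)) cxy => //.
  move=> z z' cz /=; rewrite /rel_of /= => /orP [Hp | Hs].
    move: Hp; rewrite /endsEq => /orP [] /andP [/eqP H1 /eqP H2].
      by rewrite -H1 in cz; rewrite cz in xa.
    by rewrite -H2 in cz; rewrite cz in xb.
  apply: (connect_trans cz); apply: connect1; exact: Hs.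
move=> x y xX yX cxy.
have symS' : connect_sym (rel_of (p :: s)) by apply: sym_connect_sym; apply: rel_of_sym.
case xa: (connect (rel_of s) x p.1); last by apply: key => //; rewrite xa.
case ya: (connect (rel_of s) y p.1); last by symmetry; apply: key => //; rewrite ?ya // symS'.
apply: IH; [by move: xX; rewrite inE => /andP [] | by move: yX; rewrite inE => /andP [] |].
by apply: (connect_trans xa); rewrite symS.
Qed.

Lemma adjE_rel_of (V E : finType) (ends : E -> V * V) (T : {set E}) :
  adjE ends T =2 rel_of [seq ends t | t <- enum T].
Proof.
move=> x y; rewrite /adjE /rel_of has_map; apply/existsP/hasP => [[t /andP [tT H]]|[t tT H]].
  by exists t; rewrite ?mem_enum.
by exists t; rewrite -mem_enum tT.
Qed.

Lemma lowbound (V E : finType) (ends : E -> V * V) (T : {set E}) :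
  (forall x y, connect (adjE ends T) x y) -> #|V| <= #|T|.+1.
Proof.
move=> Hc; have [X [HX HXc]] := lowbound_seq [seq ends t | t <- enum T].
rewrite size_map -cardE in HX.
suff : #|X| <= 1 by lia.
apply/card_le1_eqP => x y xX yX; apply: HXc => //.
by rewrite -(eq_connect (adjE_rel_of ends T)).
Qed.
Section Uplus.
Variables (A B : finType).
Definition uplus (R : {set A}) (L : {set B}) : {set A + B} := inl @: R :|: inr @: L.

Lemma uplus_inl R L a : (inl a \in uplus R L) = (a \in R).
Proof.
rewrite !inE; apply/orP/idP => [[/imsetP [a' Ha' [->]] // | /imsetP [? _ //]] | H].
by left; apply: imset_f.
Qed.

Lemma uplus_inr R L b : (inr b \in uplus R L) = (b \in L).
Proof.
rewrite !inE; apply/orP/idP => [[/imsetP [? _ //] | /imsetP [b' Hb' [->]] //] | H].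
by right; apply: imset_f.
Qed.

Lemma card_uplus R L : #|uplus R L| = #|R| + #|L|.
Proof.
rewrite cardsU !card_imset; try (by move=> x y [->]).
suff -> : inl @: R :&: inr @: L = set0 by rewrite cards0 subn0.
apply/setP => x; rewrite !inE; apply/andP => [[/imsetP [a _ ->] /imsetP [? _ //]]].
Qed.

Definition usplit (T : {set A + B}) : {set A} * {set B} :=
  ([set a | inl a \in T], [set b | inr b \in T]).

Lemma usplitK : cancel usplit (fun p => uplus p.1 p.2).
Proof.
move=> T; apply/setP => [[a|b]]; by rewrite ?uplus_inl ?uplus_inr inE.
Qed.

Lemma uplusK : cancel (fun p => uplus p.1 p.2) usplit.
Proof.
move=> [R L]; congr (_, _); apply/setP => x; by rewrite inE ?uplus_inl ?uplus_inr.
Qed.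

Lemma sum_split (P : {set A + B} -> bool) :
  #|[set T | P T]| = \sum_(L : {set B}) #|[set R : {set A} | P (uplus R L)]|.
Proof.
rewrite -sum1_card (reindex (fun p : {set A} * {set B} => uplus p.1 p.2)) /=; last first.
  by exists usplit => x _; [apply: uplusK | apply: usplitK].
rewrite (eq_bigl (fun p => P (uplus p.1 p.2))); last by move=> p; rewrite inE.
rewrite -(pair_big_dep xpredT (fun i j => P (uplus i j)) (fun _ _ => 1)) /=.
rewrite (exchange_big_dep xpredT) //=; apply: eq_bigr => L _.
by rewrite -sum1_card; apply: eq_bigl => R; rewrite inE.
Qed.
End Uplus.
Section Sel.
Variables (I J : finType).
Definition cnt (L : {set I * J}) (k : I) : nat := #|[set j | (k, j) \in L]|.
Definition sel (D : {set I}) (L : {set I * J}) : bool := [forall k, cnt L k == (k \in D)].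

Lemma card_pairs (L : {set I * J}) : #|L| = \sum_k cnt L k.
Proof.
rewrite -sum1_card big_mkcond /=.
rewrite (eq_bigr (fun p => (fun k j => if (k, j) \in L then 1 else 0) p.1 p.2)); last by case.
rewrite -(pair_bigA _ (fun k j => if (k, j) \in L then 1 else 0)) /=.
apply: eq_bigr => k _; rewrite /cnt -sum1_card big_mkcond /=.
rewrite [RHS]big_mkcond /=; apply: eq_bigr => j _; by rewrite inE.
Qed.

Definition fsel (f : {ffun I -> option J}) : {set I * J} := [set p | f p.1 == Some p.2].

Lemma fsel_inj : injective fsel.
Proof.
move=> f g H; apply/ffunP => k.
case Hf: (f k) => [j|]; case Hg: (g k) => [j'|] //.
- have : (k, j) \in fsel f by rewrite inE Hf.
  by rewrite H inE /= Hg => /eqP.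
- have : (k, j) \in fsel f by rewrite inE Hf.
  by rewrite H inE /= Hg.
- have : (k, j') \in fsel g by rewrite inE Hg.
  by rewrite -H inE /= Hf.
Qed.

Lemma cnt_fsel f k : cnt (fsel f) k = (f k != None).
Proof.
rewrite /cnt; case Hf: (f k) => [j|] /=.
  rewrite (_ : [set _ | _] = [set j]) ?cards1 //.
  by apply/setP => j'; rewrite !inE /= Hf eq_sym.
rewrite (_ : [set _ | _] = set0) ?cards0 //.
by apply/setP => j'; rewrite !inE /= Hf.
Qed.

Lemma card_sel D : #|[set L | sel D L]| = #|J| ^ #|D|.
Proof.
have cR : #|[pred o : option J | o != None]| = #|J|.
  by rewrite (cardC1 (None : option J)) card_option.
rewrite -cR -(card_pffun_on None) -(card_imset _ fsel_inj); apply: eq_card => L.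
rewrite inE; apply/idP/imsetP => [HL | [f Hf ->]].
  exists [ffun k => [pick j | (k, j) \in L]].
    apply/pffun_onP; split.
      apply/subsetP => k; rewrite inE ffunE.
      case: pickP => // j Hj _.
      have : 0 < cnt L k by apply/card_gt0P; exists j; rewrite inE.
      by move/forallP: HL => /(_ k)/eqP ->; case: (k \in D).
    move=> _ /imageP [k Hk ->]; rewrite inE ffunE; case: pickP => // H.
    move/forallP: HL => /(_ k); rewrite Hk /cnt => /eqP Hc.
    have /card_gt0P [j] : 0 < #|[set j | (k, j) \in L]| by rewrite Hc.
    by rewrite inE H.
  apply/setP => [[k j]]; rewrite inE ffunE /=.
  case: pickP => [j' Hj' | H]; last by rewrite H.
  apply/idP/eqP => [Hj | [<-] //]; congr Some.
  have : cnt L k <= 1 by move/forallP: HL => /(_ k) /eqP ->; case: (k \in D).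
  by move/card_le1_eqP => /(_ j' j); rewrite !inE => H; rewrite H.
move/pffun_onP: Hf => [Hs Hr]; apply/forallP => k; rewrite cnt_fsel.
case Dk: (k \in D).
  by have := Hr (f k) (image_f f Dk); rewrite inE => ->.
apply/eqP; case Hfk: (f k) => //; move/subsetP: Hs => /(_ k).
by rewrite inE Hfk Dk => /(_ isT).
Qed.

Lemma sel_cnt D L k : sel D L -> cnt L k = (k \in D).
Proof. by move/forallP/(_ k)/eqP. Qed.

Lemma card_sel_L D L : sel D L -> #|L| = #|D|.
Proof.
move=> H; rewrite card_pairs (eq_bigr _ (fun k _ => sel_cnt k H)).
by rewrite -sum1_card [RHS]big_mkcond /=; apply: eq_bigr => k _; case: (k \in D).
Qed.
End Sel.
Lemma endsEq_eq (V : eqType) (p : V * V) a b x y :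
  endsEq p a b -> endsEq p x y = endsEq (a, b) x y.
Proof.
case: p => p1 p2; rewrite /endsEq /= => /orP [] /andP [/eqP -> /eqP ->] //.
by case: (a == x); case: (a == y); case: (b == x); case: (b == y).
Qed.

Lemma endsEq_refl (V : eqType) (a b : V) : endsEq (a, b) a b.
Proof. by rewrite /endsEq !eqxx. Qed.

Lemma endsEq_inj (V W : eqType) (f : V -> W) (a b x y : V) :
  injective f -> endsEq (f a, f b) (f x) (f y) = endsEq (a, b) x y.
Proof. by move=> fi; rewrite /endsEq /= !(inj_eq fi). Qed.

Lemma endsEqP (V : eqType) (a b x y : V) :
  endsEq (a, b) x y -> (x = a /\ y = b) \/ (x = b /\ y = a).
Proof. by rewrite /endsEq /= => /orP [] /andP [/eqP -> /eqP ->]; [left|right]. Qed.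

Lemma arith1 r N d : 1 < N -> 0 < d -> (r + d == (N + d.-1).-1) = (r + 1 == N.-1).
Proof. by move=> *; apply/eqP/eqP; lia. Qed.
Lemma arith2 r N d : 1 < N -> 0 < d -> (r + d.-1 == (N + d.-1).-1) = (r + 0 == N.-1).
Proof. by move=> *; apply/eqP/eqP; lia. Qed.

Lemma sel_of_le (I J : finType) (D : {set I}) (L : {set I * J}) : (forall k, (k \in D : nat) <= cnt L k) -> #|L| <= #|D| -> sel D L.
Proof.
move=> H HL.
have [H1 Heq] := @leqif_sum _ xpredT (fun k => (k \in D : nat) == cnt L k)
  (fun k => (k \in D : nat)) (cnt L) (fun k _ => leqif_eq (H k)).
have E1 : \sum_(i | xpredT i) (i \in D : nat) = #|D|.
  by rewrite -sum1_card [RHS]big_mkcond /=; apply: eq_bigr => i _; case: (i \in D).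
rewrite E1 -card_pairs in H1 Heq.
have : [forall (i | xpredT i), (i \in D : nat) == cnt L i].
  by rewrite -Heq eqn_leq H1 HL.
move/forallP => HH; apply/forallP => k; rewrite eq_sym; exact: HH k.
Qed.

Lemma arith3 r l N d : 0 < d -> r + l = (N + d.-1).-1 -> N <= (r + 1).+1 -> l <= d.
Proof. move=> *; lia. Qed.
Lemma arith4 r l N d : 0 < d -> r + l = (N + d.-1).-1 -> N <= (r + 0).+1 -> l <= d.-1.
Proof. move=> *; lia. Qed.
Lemma arith5 r b N : 0 < b -> N <= (r + 1).+1 ->
  (r + b == N.-1) = (b == 1) && (r + 1 == N.-1).
Proof.
move=> *; apply/eqP/andP => [H|[/eqP H1 /eqP H2]]; first (split; apply/eqP); lia.
Qed.

Lemma sum_nat_bool (T : finType) (P : pred T) :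
  \sum_x (P x : nat) = #|[set x | P x]|.
Proof.
by rewrite -sum1_card [RHS]big_mkcond /=; apply: eq_bigr => x _; rewrite inE; case: (P x).
Qed.

Lemma card_singletons (T : finType) : #|[set B : {set T} | #|B| == 1]| = #|T|.
Proof.
rewrite -cardsT -(card_imset [set: T] (@set1_inj T)); apply: eq_card => B.
rewrite !inE; apply/cards1P/imsetP => [[x ->]|[x _ ->]]; by exists x.
Qed.

Section Thick.
Variables (V V' A : finType) (u u' : V) (e d m : nat) (b0 : 'I_e).
Variable endsA : A -> V * V.
Variable endsG : A + 'I_e -> V * V.
Variable endsG' : A + ('I_d * 'I_m) -> V' * V'.
Variables (iota : V -> V') (iinv : V' -> V) (w : nat -> V') (pos : V' -> nat).
Hypotheses (Huu : u' != u) (Hd : 0 < d) (HiK : cancel iota iinv)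
 (Hw0 : w 0 = iota u') (Hwd : w d = iota u)
 (Hclass : forall y, iota (iinv y) != y -> 0 < pos y < d /\ w (pos y) = y)
 (Hwint : forall k, 0 < k < d -> iota (iinv (w k)) != w k /\ pos (w k) = k)
 (HeG : forall a, endsG (inl a) = endsA a)
 (HeB : forall b, endsEq (endsG (inr b)) u' u)
 (HeG' : forall a, endsG' (inl a) = (iota (endsA a).1, iota (endsA a).2))
 (HeL : forall k j, endsEq (endsG' (inr (k, j))) (w k) (w k.+1))
 (HcV : #|V'| = #|V| + d.-1).

Let iota_inj : injective iota := can_inj HiK.

Definition isorig (y : V') := iota (iinv y) == y.

Lemma isorig_iota x : isorig (iota x).
Proof. by rewrite /isorig HiK. Qed.

Lemma w_cases k : k <= d ->
  [\/ k = 0 /\ w k = iota u', k = d /\ w k = iota u | (0 < k < d) /\ ~~ isorig (w k)].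
Proof.
move=> kd; case: k kd => [|k] kd; first by constructor 1.
case: (ltngtP k.+1 d) => [lt|gt|->]; last by constructor 2.
  by constructor 3; split => //; have [] := Hwint (k := k.+1) (_ : 0 < k.+1 < d).
by move: kd; rewrite leqNgt gt.
Qed.

Lemma w_internal k : k <= d -> ~~ isorig (w k) -> 0 < k < d /\ pos (w k) = k.
Proof.
move=> kd; case: (w_cases kd) => [[-> ->]|[-> ->]|[H _]]; rewrite ?isorig_iota //.
by have [_ ->] := Hwint H.
Qed.

Definition adjR (R : {set A}) : rel V :=
  fun x y => [exists a in R, endsEq (endsA a) x y].

Definition pres (L : {set 'I_d * 'I_m}) (k : 'I_d) : bool := 0 < cnt L k.

Lemma adjG_E R B x y :
  adjE endsG (uplus R B) x y = adjR R x y || ((B != set0) && endsEq (u', u) x y).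
Proof.
apply/existsP/orP => [[[a|b] /andP [H1 H2]]|[/existsP [a /andP [H1 H2]]|/andP [/set0Pn [b Hb] H]]].
- by left; apply/existsP; exists a; rewrite -(uplus_inl R B) H1 -HeG.
- right; rewrite -(endsEq_eq _ _ (HeB b)) H2 andbT; apply/set0Pn; exists b.
  by rewrite -(uplus_inr R).
- by exists (inl a); rewrite uplus_inl H1 HeG.
- by exists (inr b); rewrite uplus_inr Hb (endsEq_eq _ _ (HeB b)).
Qed.

Lemma adjG'_E R L x y :
  adjE endsG' (uplus R L) x y =
  [exists a in R, endsEq (iota (endsA a).1, iota (endsA a).2) x y] ||
  [exists k, pres L k && endsEq (w k, w k.+1) x y].
Proof.
apply/existsP/orP => [[[a|[k j]] /andP [H1 H2]]|[/existsP [a /andP [H1 H2]]|/existsP [k /andP [Hk H]]]].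
- by left; apply/existsP; exists a; rewrite -(uplus_inl R L) H1 -HeG'.
- right; apply/existsP; exists k; rewrite -(endsEq_eq _ _ (HeL k j)) H2 andbT.
  by apply/card_gt0P; exists j; rewrite inE -(uplus_inr R).
- by exists (inl a); rewrite uplus_inl H1 HeG'.
- move: Hk => /card_gt0P [j]; rewrite inE => Hj.
  by exists (inr (k, j)); rewrite uplus_inr Hj (endsEq_eq _ _ (HeL k j)).
Qed.

Lemma conn_down R L B (phi : V' -> V) :
  (forall x, phi (iota x) = x) ->
  (forall k, pres L k -> phi (w k) = phi (w k.+1) \/
        (B != set0 /\ endsEq (u', u) (phi (w k)) (phi (w k.+1)))) ->
  forall x y, connect (adjE endsG' (uplus R L)) x y ->
              connect (adjE endsG (uplus R B)) (phi x) (phi y).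
Proof.
move=> Hphi Hl; apply: connect_mapW => x y; rewrite adjG'_E.
case/orP => [/existsP [a /andP [Ha H]] | /existsP [k /andP [Hk H]]].
  apply: connect1; rewrite adjG_E; apply/orP; left; apply/existsP; exists a.
  rewrite Ha /=; case/endsEqP: H => [[-> ->]|[-> ->]]; rewrite !Hphi.
    by case: (endsA a) => ??; apply: endsEq_refl.
  by case: (endsA a) => ??; rewrite endsEqC; apply: endsEq_refl.
have sym := sym_connect_sym (adjE_sym endsG (uplus R B)).
case/endsEqP: H => [[-> ->]|[-> ->]]; [|rewrite sym];
  case: (Hl k Hk) => [->|[HB Hu]]; rewrite ?connect0 //;
  by apply: connect1; rewrite adjG_E HB Hu orbT.
Qed.

Definition phi1 (y : V') : V := if isorig y then iinv y else u.
Definition phi2 (k0 : nat) (y : V') : V :=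
  if isorig y then iinv y else if pos y <= k0 then u' else u.

Lemma phi1_iota x : phi1 (iota x) = x.
Proof. by rewrite /phi1 isorig_iota HiK. Qed.
Lemma phi2_iota k0 x : phi2 k0 (iota x) = x.
Proof. by rewrite /phi2 isorig_iota HiK. Qed.

Lemma phi1_w k : k <= d -> phi1 (w k) = if k == 0 then u' else u.
Proof.
move=> kd; case: (w_cases kd) => [[-> ->]|[-> ->]|[H1 H2]].
- by rewrite phi1_iota.
- by rewrite phi1_iota; case: d Hd.
- by rewrite /phi1 (negbTE H2); case: k H1 {kd H2}.
Qed.

Lemma phi2_w k0 k : k0 < d -> k <= d -> phi2 k0 (w k) = if k <= k0 then u' else u.
Proof.
move=> k0d kd; case: (w_cases kd) => [[-> ->]|[-> ->]|[H1 H2]].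
- by rewrite phi2_iota.
- by rewrite phi2_iota leqNgt k0d.
- by rewrite /phi2 (negbTE H2); have [_ ->] := w_internal kd H2.
Qed.


Notation conn' R L := (connect (adjE endsG' (uplus R L))).
Notation conn R B := (connect (adjE endsG (uplus R B))).

Lemma path_conn R L i j : i <= j <= d ->
  (forall k : 'I_d, i <= k < j -> pres L k) -> conn' R L (w i) (w j).
Proof.
elim: j => [|j IH] /andP [Hij Hjd] H.
  by move: Hij; rewrite leqn0 => /eqP ->; apply: connect0.
case: (ltngtP i j.+1) => [lt | gt | <-]; last exact: connect0; last first.
  by move: Hij; rewrite leqNgt gt.
have jd : j < d by [].
apply: (connect_trans (IH _ _)); first by apply/andP; split; [exact: ltnSE lt | exact: ltnW Hjd].
  by move=> k /andP [k1 k2]; apply: H; rewrite k1 (ltn_trans k2).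
apply: connect1; rewrite adjG'_E; apply/orP; right; apply/existsP.
exists (Ordinal jd); rewrite /= endsEq_refl andbT; apply: H => /=.
by rewrite ltnSn andbT (ltnSE lt).
Qed.

Lemma disconn R L (k1 k2 : 'I_d) : k1 < k2 -> ~~ pres L k1 -> ~~ pres L k2 ->
  ~~ conn' R L (w k2) (w 0).
Proof.
move=> k12 p1 p2; apply/negP => H.
pose C := (fun y => ~~ isorig y && (k1 < pos y <= k2)).
have : C (w 0).
  apply: (connect_closedW (C := C) _ _ H) => /=.
    move=> z z' /andP [zo /andP [z1 z2]]; rewrite adjG'_E.
    case/orP => [/existsP [a /andP [_ Ha]] | /existsP [k /andP [Hk Ha]]].
      by case/endsEqP: Ha => [[Hz _]|[Hz _]]; rewrite Hz isorig_iota in zo.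
    have kd := ltn_ord k.
    case/endsEqP: Ha => [[Hz Hz']|[Hz Hz']]; subst z z'.
    + have [/andP [k0 _] pk] := w_internal (ltnW kd) zo.
      rewrite pk in z1 z2.
      have kk2 : k < k2.
        rewrite ltn_neqAle z2 andbT; apply/negP => /eqP kk.
        have kk' : k = k2 by apply: val_inj.
        by rewrite -kk' Hk in p2.
      have Hk1d : 0 < k.+1 < d by rewrite /= (leq_ltn_trans kk2).
      have [H1 H2] := Hwint Hk1d.
      by rewrite /C /isorig H1 H2 /= ltnS (ltnW z1) kk2.
    + have [/andP [_ kd'] pk] := w_internal kd zo.
      rewrite pk in z1 z2.
      have kk1 : k1 < k.
        rewrite ltn_neqAle -ltnS z1 andbT; apply/negP => /eqP kk.
        have kk' : k1 = k by apply: val_inj.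
        by rewrite kk' Hk in p1.
      have Hkd : 0 < k < d by rewrite (leq_ltn_trans _ kk1) ?ltn_ord.
      have [H1 H2] := Hwint Hkd.
      by rewrite /C /isorig H1 H2 /= kk1 (ltnW z2).
  have Hk2d : 0 < k2 < d by rewrite (leq_ltn_trans _ k12) ?ltn_ord.
  have [H1 H2] := Hwint Hk2d.
  by rewrite /C /isorig H1 H2 /= k12 leqnn.
by rewrite /C Hw0 isorig_iota.
Qed.

Lemma conn_up R L B : (B != set0 -> conn' R L (iota u') (iota u)) ->
  forall x y, conn R B x y -> conn' R L (iota x) (iota y).
Proof.
move=> HB; apply: connect_mapW => x y; rewrite adjG_E.
case/orP => [/existsP [a /andP [Ha H]] | /andP [HB0 H]].
  apply: connect1; rewrite adjG'_E; apply/orP; left; apply/existsP; exists a.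
  rewrite Ha /=; case: (endsA a) H => a1 a2 H.
  by rewrite (endsEq_inj _ _ _ _ iota_inj).
have sym := sym_connect_sym (adjE_sym endsG' (uplus R L)).
by case/endsEqP: H => [[-> ->]|[-> ->]]; [|rewrite sym]; apply: HB.
Qed.

Lemma conn_all R L :
  (forall x y, conn' R L (iota x) (iota y)) ->
  (forall k, 0 < k < d -> exists x, conn' R L (iota x) (w k)) ->
  forall y1 y2, conn' R L y1 y2.
Proof.
move=> Hi Hw.
have sym := sym_connect_sym (adjE_sym endsG' (uplus R L)).
have Hy : forall y, exists x, conn' R L (iota x) y.
  move=> y; case Hy: (isorig y).
    by exists (iinv y); move/eqP: Hy => ->; apply: connect0.
  by have [H1 H2] := Hclass (negbT Hy); rewrite -H2; apply: Hw.
move=> y1 y2; have [x1 H1] := Hy y1; have [x2 H2] := Hy y2.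
rewrite sym in H1; apply: (connect_trans H1); apply: (connect_trans (Hi x1 x2)); exact: H2.
Qed.

Lemma N2 : 1 < #|V|.
Proof. by apply/card_gt1P; exists u', u. Qed.

Lemma set1_neq0 (T : finType) (x : T) : [set x] != set0.
Proof. by apply/set0Pn; exists x; rewrite inE. Qed.

Lemma tree_full R L : sel setT L ->
  treeE endsG' (uplus R L) = treeE endsG (uplus R [set b0]).
Proof.
move=> HL; rewrite /treeE !card_uplus (card_sel_L HL) cardsT card_ord cards1 HcV.
have N2' := N2.
congr andb; first exact: arith1.
have presL : forall k, pres L k.
  by move=> k; rewrite /pres (sel_cnt k HL) inE.
apply/forallP/forallP => H.
  move=> x; apply/forallP => y; rewrite -(phi1_iota x) -(phi1_iota y).
  apply: (conn_down (L := L)); first exact: phi1_iota.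
    move=> k _; have kd := ltn_ord k.
    rewrite !phi1_w ?(ltnW kd) //=; case: (val k == 0); [right|left] => //.
    by rewrite set1_neq0 endsEq_refl.
  by move/forallP: (H (iota x)) => /(_ (iota y)).
move=> y1; apply/forallP => y2; apply: conn_all.
  move=> x y; apply: (conn_up (B := [set b0])); last first.
    by move/forallP: (H x) => /(_ y).
  by move=> _; rewrite -Hw0 -Hwd; apply: path_conn => //; rewrite leqnn andbT.
move=> k /andP [k0 kd]; exists u'; rewrite -Hw0; apply: path_conn.
  by rewrite /= ltnW.
by move=> *; apply: presL.
Qed.

Lemma tree_miss R L (k0 : 'I_d) : sel [set~ k0] L ->
  treeE endsG' (uplus R L) = treeE endsG (uplus R set0).
Proof.
move=> HL; rewrite /treeE !card_uplus (card_sel_L HL) cardsC1 card_ord cards0 HcV.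
have N2' := N2.
congr andb; first exact: arith2.
have presL : forall k, pres L k = (k != k0).
  by move=> k; rewrite /pres (sel_cnt k HL) !inE; case: (k != k0).
have sym := sym_connect_sym (adjE_sym endsG' (uplus R L)).
apply/forallP/forallP => H.
  move=> x; apply/forallP => y; rewrite -(phi2_iota k0 x) -(phi2_iota k0 y).
  apply: (conn_down (L := L)); first exact: phi2_iota.
    move=> k; rewrite presL => kk0; have kd := ltn_ord k; left.
    rewrite !phi2_w ?(ltnW kd) //.
    have kk0' : (val k == val k0) = false by apply/negbTE.
    by rewrite leq_eqVlt kk0'.
  by move/forallP: (H (iota x)) => /(_ (iota y)).
move=> y1; apply/forallP => y2; apply: conn_all.
  move=> x y; apply: (conn_up (B := set0)); first by rewrite eqxx.
  by move/forallP: (H x) => /(_ y).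
move=> k /andP [kp kd]; case: (leqP k k0) => kk0.
  exists u'; rewrite -Hw0; apply: path_conn; first by rewrite /= ltnW.
  move=> k' /andP [_ k'k]; rewrite presL; apply/eqP => Hk.
  by rewrite Hk ltnNge kk0 in k'k.
exists u; rewrite -Hwd sym; apply: path_conn; first by rewrite leqnn andbT ltnW.
move=> k' /andP [kk' _]; rewrite presL; apply/eqP => Hk.
by rewrite Hk leqNgt kk0 in kk'.
Qed.





Lemma down_full R L : (forall x y, conn' R L x y) -> forall x y, conn R [set b0] x y.
Proof.
move=> H x y; rewrite -(phi1_iota x) -(phi1_iota y).
apply: (conn_down (L := L)); first exact: phi1_iota.
  move=> k _; have kd := ltn_ord k.
  rewrite !phi1_w ?(ltnW kd) //=; case: (val k == 0); [right|left] => //.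
  by rewrite set1_neq0 endsEq_refl.
exact: H.
Qed.

Lemma down_miss R L (k0 : 'I_d) : ~~ pres L k0 -> (forall x y, conn' R L x y) ->
  forall x y, conn R set0 x y.
Proof.
move=> Hk0 H x y; rewrite -(phi2_iota k0 x) -(phi2_iota k0 y).
apply: (conn_down (L := L)); first exact: phi2_iota.
  move=> k Hk; have kd := ltn_ord k; left.
  have kk0 : k != k0 by apply: contraNneq Hk0 => <-.
  rewrite !phi2_w ?(ltnW kd) //.
  have kk0' : (val k == val k0) = false by apply/negbTE.
  by rewrite leq_eqVlt kk0'.
exact: H.
Qed.

Lemma tree_none R L : ~~ sel setT L -> (forall k0, ~~ sel [set~ k0] L) ->
  ~~ treeE endsG' (uplus R L).
Proof.
move=> H1 H2; apply/negP => /andP [/eqP Hc /forallP Hconn].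
have Hall : forall x y, conn' R L x y by move=> x y; move/forallP: (Hconn x).
rewrite card_uplus HcV in Hc.
pose Z := [set k | ~~ pres L k].
case: (ltnP 1 #|Z|) => [/card_gt1P [k1 [k2 [z1 z2 k12]]] | Zle1].
  rewrite !inE in z1 z2.
  case: (ltngtP k1 k2) => [lt|gt|eq].
  - by move: (disconn R lt z1 z2); rewrite Hall.
  - by move: (disconn R gt z2 z1); rewrite Hall.
  - by move: k12; rewrite (val_inj eq) eqxx.
case: (posnP #|Z|) => [Z0 | Zpos].
  have presL : forall k, pres L k.
    move=> k; apply: negbNE; apply/negP => Hk.
    by have := card0_eq Z0 k; rewrite inE Hk.
  have lb := lowbound (down_full Hall).
  rewrite card_uplus cards1 in lb.
  have Ld := arith3 Hd Hc lb.
  move: H1; rewrite sel_of_le //; last by rewrite cardsT card_ord.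
  by move=> k; rewrite inE; apply: presL.
have /cards1P [k0 HZ] : #|Z| == 1 by rewrite eqn_leq Zle1 Zpos.
have pk0 : ~~ pres L k0 by have := set11 k0; rewrite -HZ inE.
have lb := lowbound (down_miss pk0 Hall).
rewrite card_uplus cards0 in lb.
have Ld := arith4 Hd Hc lb.
move: (H2 k0); rewrite sel_of_le //; last by rewrite cardsC1 card_ord.
move=> k; rewrite !inE; case: (eqVneq k k0) => [->|kk0] //=.
have : k \notin Z by rewrite HZ inE.
by rewrite inE negbK.
Qed.

Lemma treeG_B R B : B != set0 ->
  treeE endsG (uplus R B) = (#|B| == 1) && treeE endsG (uplus R [set b0]).
Proof.
move=> HB.
have Hadj : adjE endsG (uplus R B) =2 adjE endsG (uplus R [set b0]).
  by move=> x y; rewrite !adjG_E HB set1_neq0.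
have Hc : [forall x, forall y, conn R B x y] = [forall x, forall y, conn R [set b0] x y].
  by apply: eq_forallb => x; apply: eq_forallb => y; apply: eq_connect.
rewrite /treeE Hc; case C: [forall x, forall y, conn R [set b0] x y]; rewrite ?andbF //.
rewrite !andbT !card_uplus cards1.
have lb : #|V| <= (#|R| + 1).+1.
  have := @lowbound _ _ endsG (uplus R [set b0]); rewrite card_uplus cards1; apply.
  by move=> x y; move/forallP: C => /(_ x) /forallP /(_ y).
by apply: arith5 => //; rewrite card_gt0.
Qed.

Definition alpha := #|[set R | treeE endsG (uplus R set0)]|.
Definition beta := #|[set R | treeE endsG (uplus R [set b0])]|.

Lemma tauG : tauE endsG = alpha + e * beta.
Proof.
rewrite /tauE sum_split.
rewrite (eq_bigr (fun B => (B == set0) * alpha + (#|B| == 1) * beta)); last first.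
  move=> B _; case: (eqVneq B set0) => [->|HB].
    by rewrite cards0 /= mul1n mul0n addn0.
  rewrite mul0n add0n.
  case H1 : (#|B| == 1).
    by rewrite mul1n; apply: eq_card => R; rewrite !inE treeG_B // H1.
  by rewrite mul0n; apply: eq_card0 => R; rewrite !inE treeG_B // H1.
rewrite big_split /= -!big_distrl /= !sum_nat_bool card_singletons card_ord.
rewrite (_ : [set x : {set 'I_e} | x == set0] = [set set0]); last by apply/setP => x; rewrite !inE.
by rewrite cards1 mul1n mulnC.
Qed.

Lemma tauG' : tauE endsG' = m ^ d * beta + d * m ^ d.-1 * alpha.
Proof.
rewrite /tauE sum_split.
rewrite (eq_bigr (fun L => sel setT L * beta + (\sum_k0 (sel [set~ k0] L : nat)) * alpha));
  last first.
  move=> L _; case HF: (sel setT L).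
    rewrite big1 ?muln0 ?addn0 ?mul1n; last first.
      move=> k0 _; apply/eqP; rewrite eqb0; apply/negP => HM.
      by have := sel_cnt k0 HF; rewrite (sel_cnt k0 HM) !inE eqxx.
    by apply: eq_card => R; rewrite !inE tree_full.
  rewrite mul0n add0n.
  case: (boolP [exists k0, sel [set~ k0] L]) => [/existsP [k0 HM] | HN].
    rewrite (bigD1 k0) //= HM big1 ?addn0 ?mul1n.
      by apply: eq_card => R; rewrite !inE (tree_miss _ HM).
    move=> k1 k10; apply/eqP; rewrite eqb0; apply/negP => HM1.
    by have := sel_cnt k0 HM1; rewrite (sel_cnt k0 HM) !inE eqxx eq_sym k10.
  rewrite big1 ?mul0n; last first.
    move=> k0 _; apply/eqP; rewrite eqb0; apply/negP => HM.
    by move/existsP: HN; apply; exists k0.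
  apply: eq_card0 => R; rewrite !inE; apply/negbTE/tree_none; first by rewrite HF.
  by move=> k0; apply/negP => HM; move/existsP: HN; apply; exists k0.
rewrite big_split /= -!big_distrl /= sum_nat_bool card_sel cardsT !card_ord.
rewrite exchange_big /=.
rewrite (eq_bigr (fun _ => m ^ d.-1)); last first.
  by move=> k0 _; rewrite sum_nat_bool card_sel cardsC1 !card_ord.
by rewrite sum_nat_const card_ord.
Qed.

Lemma tau_thick : m = e * d -> tauE endsG' = d * (e * d) ^ d.-1 * tauE endsG.
Proof.
move=> Hm; rewrite tauG' tauG Hm.
case: d Hd => // d' _ /=.
rewrite expnS mulnDr; ring.
Qed.

End Thick.

Lemma transport (k : nat) (c : 'I_k -> 'I_k -> nat) (E : finType) (f : E -> edge_t c) :
  injective f -> (forall t, is_edge t -> exists x, t = f x) -> (forall x, is_edge (f x)) ->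
  num_spanning_trees c = tauE (fun x => (f x).1).
Proof.
move=> finj fsurj fedge.
have key : forall T : {set E}, spanning_tree (f @: T) = treeE (fun x => (f x).1) T.
  move=> T; rewrite /spanning_tree /treeE card_imset // card_ord.
  have -> : f @: T \subset [set t | is_edge t].
    by apply/subsetP => t /imsetP [x _ ->]; rewrite inE.
  rewrite /=; congr andb; apply: eq_forallb => x; apply: eq_forallb => y.
  apply: eq_connect => a b; apply/existsP/existsP.
    by move=> [t /andP [/imsetP [z zT ->] H]]; exists z; rewrite zT.
  by move=> [z /andP [zT H]]; exists (f z); rewrite imset_f.
rewrite /num_spanning_trees /tauE -(card_imset _ (imset_inj finj)).
apply: eq_card => T'; rewrite inE; apply/idP/imsetP.
  move=> HT.
  have HT' : T' = f @: (f @^-1: T').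
    apply/setP => t; apply/idP/imsetP => [tT | [x xT ->]]; last by rewrite inE in xT.
    move: (HT); rewrite /spanning_tree => /and3P [/subsetP /(_ t tT) Ht _ _]; rewrite inE in Ht.
    by have [x Hx] := fsurj t Ht; exists x; rewrite // inE -Hx.
  by exists (f @^-1: T'); rewrite // inE -key -HT'.
by move=> [T HT ->]; rewrite key; rewrite inE in HT.
Qed.

Section ConcG.
Variables (n : nat) (c : 'I_n.+1 -> 'I_n.+1 -> nat) (v v' : 'I_n.+1).
Hypotheses (Hmg : multigraph c) (Hvv : v' != v).

Lemma le_mg_bound (k : nat) (cc : 'I_k -> 'I_k -> nat) i j : cc i j <= mg_bound cc.
Proof. exact: (leq_bigmax (i, j)). Qed.

Definition AT := {t : edge_t c | is_edge t && ~~ endsEq t.1 v' v}.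

Definition p0 : 'I_n.+1 * 'I_n.+1 := if v' < v then (v', v) else (v, v').

Lemma e_bound : c v v' <= mg_bound c.
Proof. exact: (leq_bigmax (v, v')). Qed.

Definition iotaG (x : AT + 'I_(c v v')) : edge_t c :=
  match x with inl a => val a | inr b => (p0, widen_ord e_bound b) end.

Lemma p0_ends : endsEq p0 v' v.
Proof. by rewrite /p0 /endsEq; case: ifP => _; rewrite !eqxx ?orbT. Qed.

Lemma p0_lt : p0.1 < p0.2.
Proof.
rewrite /p0; case: ifP => //= /negbT; rewrite -leqNgt leq_eqVlt => /orP [/eqP H|//].
by move: Hvv; rewrite (val_inj H) eqxx.
Qed.

Lemma c_p0 : c p0.1 p0.2 = c v v'.
Proof. by rewrite /p0; case: ifP => _ //=; rewrite Hmg.1. Qed.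

Lemma iotaG_inj : injective iotaG.
Proof.
move=> [a1|b1] [a2|b2] //=.
- by move/val_inj => ->.
- move=> H; have := valP a1; rewrite /= H /= p0_ends andbF //.
- move=> H; have := valP a2; rewrite /= -H /= p0_ends andbF //.
- by move=> [] /val_inj ->.
Qed.

Lemma iotaG_edge x : is_edge (iotaG x).
Proof.
case: x => [a|b] /=; first by case/andP: (valP a).
by rewrite /is_edge /= p0_lt c_p0 ltn_ord.
Qed.

Lemma iotaG_surj t : is_edge t -> exists x, t = iotaG x.
Proof.
move=> Ht; case Hb: (endsEq t.1 v' v); last first.
  by exists (inl (exist _ t (introT andP (conj Ht (negbT Hb))))).
move: Ht; rewrite /is_edge => /andP [lt ct].
have Hp : t.1 = p0.
  move: Hb lt; rewrite /p0 /endsEq; case: (t.1) => x y /=.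
  case/orP => /andP [/eqP -> /eqP ->] lt; first by rewrite lt.
  by rewrite ltnNge (ltnW lt).
have tb : t.2 < c v v' by rewrite -c_p0 -Hp.
exists (inr (Ordinal tb)); rewrite /=; move: Hp tb; clear Hb lt ct.
case: t => [p j] /= -> tb; by congr (_, _); apply: val_inj.
Qed.

Lemma numG : num_spanning_trees c = tauE (fun x => (iotaG x).1).
Proof. exact: transport iotaG_inj iotaG_surj iotaG_edge. Qed.

End ConcG.

Section ConcT.
Variables (n : nat) (c : 'I_n.+1 -> 'I_n.+1 -> nat) (v v' : 'I_n.+1) (d : nat).
Hypotheses (Hmg : multigraph c) (Hvv : v' != v) (Hd : 0 < d).

Definition W : 'I_n.+1 -> 'I_(n.+1 + d.-1) := widen_ord (leq_addr d.-1 n.+1).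
Definition wv (k : nat) : 'I_(n.+1 + d.-1) :=
  if k == 0 then W v' else if k == d then W v else insubd (W v) (n.+1 + k.-1).
Notation c' := (thicken c v v' d).

Lemma W_inj : injective W.
Proof. move=> i j H; apply: val_inj; exact: (congr1 val H). Qed.

Lemma tp_W i : thick_pos v v' d (W i) =
  if i == v' then Some 0 else if i == v then Some d else None.
Proof. by rewrite /thick_pos /= leqNgt ltn_ord. Qed.

Lemma tp_int (y : 'I_(n.+1 + d.-1)) : n.+1 <= y -> thick_pos v v' d y = Some (y - n.+1).+1.
Proof.
move=> Hy; rewrite /thick_pos Hy.
have -> : (val y == val v') = false by apply/negbTE; rewrite neq_ltn (leq_trans (ltn_ord v') Hy) orbT.
have -> : (val y == val v) = false by apply/negbTE; rewrite neq_ltn (leq_trans (ltn_ord v) Hy) orbT.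
by [].
Qed.

Lemma wv_val k : 0 < k < d -> val (wv k) = n.+1 + k.-1.
Proof.
case/andP => k0 kd; rewrite /wv (negbTE (lt0n_neq0 k0)) (ltn_eqF kd) val_insubd.
have -> : n.+1 + k.-1 < n.+1 + d.-1 by rewrite ltn_add2l; lia.
by [].
Qed.

Lemma wv0 : wv 0 = W v'.
Proof. by []. Qed.
Lemma wvd : wv d = W v.
Proof. by rewrite /wv (negbTE (lt0n_neq0 Hd)) eqxx. Qed.

Lemma tp_w k : k <= d -> thick_pos v v' d (wv k) = Some k.
Proof.
move=> kd; case: (posnP k) => [->|k0]; first by rewrite wv0 tp_W eqxx.
case: (ltngtP k d) => [lt|gt|->]; last first.
- by rewrite wvd tp_W eqxx eq_sym (negbTE Hvv).
- by move: kd; rewrite leqNgt gt.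
rewrite tp_int; rewrite wv_val ?k0 ?lt //; last by rewrite leq_addr.
by congr Some; case: k k0 {kd lt} => // k _; rewrite addKn.
Qed.

Lemma tp_Some (y : 'I_(n.+1 + d.-1)) a : thick_pos v v' d y = Some a -> a <= d /\ wv a = y.
Proof.
rewrite /thick_pos; case: ifP => [/eqP Hy [<-]|_]; first by split => //; apply: val_inj.
case: ifP => [/eqP Hy [<-]|_]; first by split => //; rewrite wvd; apply: val_inj.
case: ifP => // Hy [<-].
have yd : (y - n.+1).+1 < d.
  have := ltn_ord y; move: Hd Hy; clear; lia.
split; first exact: ltnW.
apply: val_inj; rewrite wv_val //=; lia.
Qed.

Lemma tp_None (y : 'I_(n.+1 + d.-1)) : thick_pos v v' d y = None -> exists i, [/\ y = W i, i != v & i != v'].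
Proof.
rewrite /thick_pos; case: ifP => // Hy'; case: ifP => // Hy; case: ifP => // Hn _.
have yn : y < n.+1 by rewrite ltnNge Hn.
exists (Ordinal yn); split; first by apply: val_inj.
- by apply/negbT.
- by apply/negbT.
Qed.

Lemma insub_W i : @insub _ (fun k => (k < n.+1)%N) _ (val (W i)) = Some i.
Proof. by rewrite /= valK. Qed.

Lemma insub_big (x : 'I_(n.+1 + d.-1)) : n.+1 <= x ->
  @insub _ (fun k => (k < n.+1)%N) 'I_n.+1 (val x) = None.
Proof. by move=> H; rewrite insubF // ltnNge H. Qed.


Lemma thick_W i j : ~~ endsEq (i, j) v' v -> c' (W i) (W j) = c i j.
Proof.
move=> Hb; rewrite /thicken !tp_W.
have vv : (v == v') = false by rewrite eq_sym; apply/negbTE.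
case: (eqVneq i v') => [Ei|iv']; case: (eqVneq j v') => [Ej|jv'];
  case: (eqVneq i v) => [Fi|iv]; case: (eqVneq j v) => [Fj|jv]; subst => //=;
  rewrite ?valK ?Hmg.2 ?eqxx ?vv //; try by move: Hvv; rewrite eqxx.
- by move: Hb; rewrite /endsEq !eqxx.
- by move: Hb; rewrite /endsEq !eqxx orbT.
- by rewrite gtn_eqF.
Qed.

Lemma thick_w k : k < d -> c' (wv k) (wv k.+1) = c v v' * d.
Proof. by move=> kd; rewrite /thicken !tp_w ?(ltnW kd) // eqxx. Qed.

Lemma thick_w' k : k < d -> c' (wv k.+1) (wv k) = c v v' * d.
Proof. by move=> kd; rewrite /thicken !tp_w ?(ltnW kd) // eqxx orbT. Qed.

Lemma endsEq_swap (T : eqType) (x y : T) : endsEq (x, y) y x.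
Proof. by rewrite /endsEq !eqxx orbT. Qed.

Lemma thick_pos' x y : 0 < c' x y ->
  (exists i j, [/\ x = W i, y = W j & ~~ endsEq (i, j) v' v]) \/
  (exists k, k < d /\ endsEq (x, y) (wv k) (wv k.+1)).
Proof.
rewrite /thicken.
case Hx: (thick_pos v v' d x) => [a|]; case Hy: (thick_pos v v' d y) => [b|].
- have [ad wa] := tp_Some Hx; have [bd wb] := tp_Some Hy.
  case: ifP => // /orP [] /eqP Hab _; right.
  + subst b; exists a; split => //; by rewrite wa wb endsEq_refl.
  + subst a; exists b; split => //; by rewrite wa wb endsEq_swap.
- have [j [-> jv jv']] := tp_None Hy; rewrite insub_W.
  case: insubP => [i _ Hi|] // _; left; exists i, j; split => //.
    by apply: val_inj; rewrite /= Hi.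
  by rewrite /endsEq /= (negbTE jv) (negbTE jv') !andbF.
- have [i [-> iv iv']] := tp_None Hx; rewrite insub_W.
  case: insubP => [j _ Hj|] // _; left; exists i, j; split => //.
    by apply: val_inj; rewrite /= Hj.
  by rewrite /endsEq /= (negbTE iv) (negbTE iv').
- have [i [-> iv iv']] := tp_None Hx; have [j [-> jv jv']] := tp_None Hy.
  rewrite !insub_W => _; left; exists i, j; split => //.
  by rewrite /endsEq /= (negbTE iv) (negbTE iv').
Qed.


Definition lo k := if wv k < wv k.+1 then wv k else wv k.+1.
Definition hi k := if wv k < wv k.+1 then wv k.+1 else wv k.

Lemma wv_neq k : k < d -> wv k != wv k.+1.
Proof.
move=> kd; apply/eqP => H; have := tp_w (ltnW kd); rewrite H tp_w //.
by move=> [] /eqP; rewrite gtn_eqF.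
Qed.

Lemma lohi_ends k : k < d -> endsEq (lo k, hi k) (wv k) (wv k.+1).
Proof. by move=> kd; rewrite /lo /hi; case: ifP => _; rewrite ?endsEq_refl ?endsEq_swap. Qed.

Lemma lohi_lt k : k < d -> lo k < hi k.
Proof.
move=> kd; rewrite /lo /hi; case: ifP => // /negbT; rewrite -leqNgt leq_eqVlt.
case/orP => // /eqP H; have : wv k.+1 = wv k by apply: val_inj.
by move/eqP; rewrite eq_sym (negbTE (wv_neq kd)).
Qed.

Lemma lohi_c k : k < d -> c' (lo k) (hi k) = c v v' * d.
Proof. by move=> kd; rewrite /lo /hi; case: ifP => _; rewrite ?thick_w ?thick_w'. Qed.

Lemma lohi_pos k : k < d ->
  minn (odflt 0 (thick_pos v v' d (lo k))) (odflt 0 (thick_pos v v' d (hi k))) = k.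
Proof.
move=> kd; rewrite /lo /hi; case: ifP => _; rewrite !tp_w ?(ltnW kd) //=.
  by rewrite (minn_idPl (leqnSn k)).
by rewrite (minn_idPr (leqnSn k)).
Qed.

Lemma HM : c v v' * d <= mg_bound c'.
Proof. by rewrite -(thick_w Hd); apply: le_mg_bound. Qed.

Lemma HK : mg_bound c <= mg_bound c'.
Proof.
apply/bigmax_leqP => [[i j]] _ /=.
case Hb: (endsEq (i, j) v' v).
  apply: leq_trans HM; apply: (@leq_trans (c v v')); last by rewrite leq_pmulr.
  by move: Hb; rewrite /endsEq /= => /orP [] /andP [/eqP -> /eqP ->]; [rewrite Hmg.1|].
by rewrite -thick_W ?Hb //; apply: le_mg_bound.
Qed.

Definition iotaG' (x : AT c v v' + ('I_d * 'I_(c v v' * d))) : edge_t c' :=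
  match x with
  | inl a => ((W (val a).1.1, W (val a).1.2), widen_ord HK (val a).2)
  | inr kj => ((lo kj.1, hi kj.1), widen_ord HM kj.2)
  end.

Lemma iotaG'_edge x : is_edge (iotaG' x).
Proof.
case: x => [a|[k j]] /=.
  case/andP: (valP a) => /andP [H1 H2] H3.
  by rewrite /is_edge /= H1 thick_W.
by rewrite /is_edge /= lohi_lt // lohi_c // ltn_ord.
Qed.

Lemma tpW_some i a : thick_pos v v' d (W i) = Some a -> (i == v') || (i == v).
Proof. by rewrite tp_W; case: (i == v'); case: (i == v). Qed.

Lemma iotaG'_inj : injective iotaG'.
Proof.
move=> [a1|[k1 j1]] [a2|[k2 j2]] /= H.
- have H1 := congr1 (fun t => val t.1.1) H; have H2 := congr1 (fun t => val t.1.2) H.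
  have H3 := congr1 (fun t => val t.2) H; simpl in H1, H2, H3.
  congr inl; apply: val_inj; clear H; move: H1 H2 H3; case: a1 => [[[x1 y1] z1] ?];
  case: a2 => [[[x2 y2] z2] ?] /= /val_inj -> /val_inj -> /val_inj -> //.
- exfalso; have H1 := congr1 (fun t => t.1.1) H; have H2 := congr1 (fun t => t.1.2) H.
  simpl in H1, H2.
  have k2d := ltn_ord k2.
  have E1 : exists a, thick_pos v v' d (lo k2) = Some a.
    by rewrite /lo; case: ifP => _; rewrite tp_w ?(ltnW k2d) //; eexists.
  have E2 : exists a, thick_pos v v' d (hi k2) = Some a.
    by rewrite /hi; case: ifP => _; rewrite tp_w ?(ltnW k2d) //; eexists.
  case: E1 => a1' Ea1; case: E2 => a2' Ea2.
  rewrite -H1 in Ea1; rewrite -H2 in Ea2.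
  have /tpW_some P1 := Ea1; have /tpW_some P2 := Ea2.
  move: P1 P2 (valP a1); case: a1 {H H1 H2 Ea1 Ea2} => [[[x y] z] Pa] /= P1 P2.
  case/andP => /andP [lt _] nb; move: P1 P2 nb lt.
  case/orP => /eqP -> /orP [] /eqP ->; rewrite /endsEq ?eqxx ?orbT //; by rewrite ltnn.
- exfalso; have H1 := congr1 (fun t => t.1.1) H; have H2 := congr1 (fun t => t.1.2) H.
  simpl in H1, H2.
  have k1d := ltn_ord k1.
  have E1 : exists a, thick_pos v v' d (lo k1) = Some a.
    by rewrite /lo; case: ifP => _; rewrite tp_w ?(ltnW k1d) //; eexists.
  have E2 : exists a, thick_pos v v' d (hi k1) = Some a.
    by rewrite /hi; case: ifP => _; rewrite tp_w ?(ltnW k1d) //; eexists.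
  case: E1 => a1' Ea1; case: E2 => a2' Ea2.
  rewrite H1 in Ea1; rewrite H2 in Ea2.
  have /tpW_some P1 := Ea1; have /tpW_some P2 := Ea2.
  move: P1 P2 (valP a2); case: a2 {H H1 H2 Ea1 Ea2} => [[[x y] z] Pa] /= P1 P2.
  case/andP => /andP [lt _] nb; move: P1 P2 nb lt.
  case/orP => /eqP -> /orP [] /eqP ->; rewrite /endsEq ?eqxx ?orbT //; by rewrite ltnn.
- have H1 := congr1 (fun t => t.1) H; have H3 := congr1 (fun t => val t.2) H.
  simpl in H1, H3.
  have Hk : nat_of_ord k1 = nat_of_ord k2.
    have E1 := lohi_pos (ltn_ord k1); have E2 := lohi_pos (ltn_ord k2).
    case: H1 => L1 L2; rewrite L1 L2 in E1; exact: (etrans (esym E1) E2).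
  have Hk' : k1 = k2 by apply: val_inj.
  have Hj' : j1 = j2 by apply: val_inj.
  by rewrite Hk' Hj'.
Qed.

Lemma iotaG'_surj t : is_edge t -> exists x, t = iotaG' x.
Proof.
case: t => [[x y] j]; rewrite /is_edge /= => /andP [lt jc].
have cpos : 0 < c' x y by apply: leq_ltn_trans jc.
case: (thick_pos' cpos) => [[i [i' [Ex Ey nb]]] | [k [kd He]]].
  subst x y; rewrite thick_W // in jc.
  have jb : j < mg_bound c by apply: leq_trans jc _; apply: le_mg_bound.
  have Pa : is_edge ((i, i'), Ordinal jb) && ~~ endsEq (i, i') v' v.
    by rewrite /is_edge /= nb jc !andbT; exact: lt.
  exists (inl (exist (fun t : edge_t c => is_edge t && ~~ endsEq t.1 v' v) _ Pa)); rewrite /=; congr (_, _); by apply: val_inj.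
have Exy : (x, y) = (lo k, hi k).
  rewrite /lo /hi; case/endsEqP: He => [[-> ->]|[-> ->]].
    by rewrite lt.
  by rewrite ltnNge (ltnW lt).
case: Exy => Ex Ey; rewrite Ex Ey lohi_c // in jc.
exists (inr (Ordinal kd, Ordinal jc)); rewrite /= Ex Ey; congr (_, _); by apply: val_inj.
Qed.

Lemma numG' : num_spanning_trees c' = tauE (fun x => (iotaG' x).1).
Proof. exact: transport iotaG'_inj iotaG'_surj iotaG'_edge. Qed.

End ConcT.

Lemma thick_count n (c : 'I_n.+1 -> 'I_n.+1 -> nat) (v v' : 'I_n.+1) d :
  multigraph c -> v' != v -> 0 < d -> 0 < c v v' ->
  num_spanning_trees (thicken c v v' d) = d * (c v v' * d) ^ d.-1 * num_spanning_trees c.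
Proof.
move=> Hmg Hvv Hd He.
rewrite (numG' Hmg Hvv Hd) (numG Hmg Hvv).
apply: (tau_thick (u := v) (u' := v') (endsA := fun a : AT c v v' => (val a).1)
  (iota := W d) (iinv := fun y => insubd v (val y)) (w := wv v v' d)
  (pos := fun y => (val y - n.+1).+1) (Ordinal He)) => //.
- by move=> i; apply: val_inj; rewrite val_insubd /= ltn_ord.
- by rewrite wvd.
- move=> y; rewrite /= => Hy.
  have yn : n.+1 <= y.
    rewrite leqNgt; apply/negP => yl; move: Hy; apply/negP; rewrite negbK.
    by apply/eqP; apply: val_inj; rewrite /= val_insubd yl.
  have yd := ltn_ord y.
  have Hp : 0 < (y - n.+1).+1 < d by apply/andP; split => //; lia.
  split => //; apply: val_inj; rewrite wv_val //=; lia.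
- move=> k Hk; split; last by rewrite wv_val //=; lia.
  apply/eqP => H; have := congr1 val H; rewrite wv_val //= val_insubd.
  have vn := ltn_ord v; case: ifP => [lt _ | _ E]; first by rewrite ltnNge leq_addr in lt.
  by move: E vn; rewrite /= => ->; rewrite ltnNge leq_addr.
- by move=> b; apply: p0_ends.
- move=> k j /=; apply: lohi_ends => //; exact: ltn_ord.
- by rewrite !card_ord.
Qed.

Unset Implicit Arguments.
Import Order.TTheory GRing.Theory Num.Theory.
Local Open Scope ring_scope.

Theorem mainTheorem5 (n : nat) (c : 'I_n.+1 -> 'I_n.+1 -> nat)
    (vi vj : 'I_n.+1) (h : nat) (S : 'cV[int]_n.+1)
    (v v' : 'I_n.+1) (e : nat) :
  multigraph c -> mg_connected c ->
  vi != vj -> (0 < h)%N ->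
  lapM c *m S = h%:Z *: \col_k ((k == vi)%:Z - (k == vj)%:Z) ->
  (\big[gcdn/0%N]_(k < n.+1) `|S k ord0 - S ord_max ord0|%N)%N = 1%N ->
  c v v' = e -> (1 <= e)%N ->
  S v' ord0 < S v ord0 ->
  let s := `|S v ord0 - S v' ord0|%N in
  num_spanning_trees (thicken c v v' s)
    = (s * (e * s) ^ s.-1 * num_spanning_trees c)%N.
Proof.
move=> Hmg _ _ _ _ _ Hce He Hlt s.
have Hvv : v' != v by apply/eqP => E; rewrite E ltxx in Hlt.
have Hs : (0 < s)%N.
  rewrite /s absz_gt0 subr_eq0; apply/eqP => E; by rewrite E ltxx in Hlt.
rewrite (thick_count Hmg Hvv Hs) ?Hce //.
Qed.
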